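(* Let $n=3$ and $r=2$. Let $\theta=(\theta_1,\theta_2,\theta_3)\in\mathbb{R}^3$ and let $T_1,T_2,T_3$ be independent random variables with $T_i\sim N(\theta_i,1)$. Let $\Phi$ be the standard normal cumulative distribution function, and set $p_i=1-\Phi(T_i)$, $q_i=\Phi(T_i)$. With $p_{(1)}\le p_{(2)}\le p_{(3)}$ and $q_{(1)}\le q_{(2)}\le q_{(3)}$ the order statistics, define $p^+_{2/3}=2\,p_{(2)}$ and $p^-_{2/3}=2\,q_{(2)}$. Let $n^+=|\{i:\theta_i>0\}|$, $n^-=|\{i:\theta_i<0\}|$ and let $H_{2/3}$ be the hypothesis $n^+<2$ and $n^-<2$. Then $p_{2/3}=\min\{p^+_{2/3},p^-_{2/3}\}$ is a valid $p$-value for $H_{2/3}$: for every $\alpha\in(0,1/2)$ and every $\theta$ satisfying $H_{2/3}$, $\Pr_\theta(p_{2/3}\le\alpha)\le\alpha$.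
   Context: $p^+_{2/3}$ and $p^-_{2/3}$ are the Bonferroni partial conjunction $p$-values $(n-r+1)p_{(r)}$ and $(n-r+1)q_{(r)}$ with $n=3$, $r=2$. $H_{2/3}$ is the ''2 out of 3 directional replicability'' null hypothesis. *)

(* Defs.v *)
From HB Require Import structures.
From mathcomp Require Import all_boot all_order all_algebra.
From mathcomp Require Import all_classical all_reals all_analysis.
Set Implicit Arguments. Unset Strict Implicit. Unset Printing Implicit Defensive.
Import Order.TTheory GRing.Theory Num.Theory.
Local Open Scope classical_set_scope.
Local Open Scope ring_scope.

Definition Phi {R : realType} (x : R) : R :=
  fine (normal_prob 0 1 `]-oo, x]).

(* Mutual independence of a finite family of real random variables:
   the product rule holds for every choice of Borel sets
   (taking A_i = setT recovers all subfamilies). *)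
Definition mutually_independent {R : realType} d (T : measurableType d)
    (P : probability T R) (n : nat) (X : 'I_n -> {RV P >-> R}) : Prop :=
  forall A : 'I_n -> set R, (forall i, measurable (A i)) ->
    P (\bigcap_(i in [set: 'I_n]) (X i @^-1` A i)) =
    (\prod_(i < n) P (X i @^-1` A i))%E.

(* k-th order statistic (1-based) of a finite list of reals. *)
Definition order_stat {R : realType} (k : nat) (s : seq R) : R :=
  nth 0 (sort <=%R s) k.-1.

Definition pc_bonf {R : realType} (n r : nat) (p : 'I_n -> R) : R :=
  (n - r + 1)%:R * order_stat r [seq p i | i <- enum 'I_n].

Definition pplus {R : realType} (n : nat) (t : 'I_n -> R) : 'I_n -> R :=
  fun i => 1 - Phi (t i).
Definition pminus {R : realType} (n : nat) (t : 'I_n -> R) : 'I_n -> R :=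
  fun i => Phi (t i).

Definition p_rn {R : realType} (n r : nat) (t : 'I_n -> R) : R :=
  Num.min (pc_bonf r (pplus t)) (pc_bonf r (pminus t)).

Definition n_plus {R : realType} (n : nat) (theta : 'I_n -> R) : nat :=
  #|[set i : 'I_n | 0 < theta i]|.
Definition n_minus {R : realType} (n : nat) (theta : 'I_n -> R) : nat :=
  #|[set i : 'I_n | theta i < 0]|.

Definition H_rn {R : realType} (n r : nat) (theta : 'I_n -> R) : Prop :=
  (n_plus theta < r)%N /\ (n_minus theta < r)%N.

(* Main.v *)
Require Import Defs.
From HB Require Import structures.
From mathcomp Require Import all_boot all_order all_algebra.
From mathcomp Require Import all_classical all_reals all_analysis.
From mathcomp Require Import measurable_realfun ring lra.
Import Order.TTheory GRing.Theory Num.Theory.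
Local Open Scope classical_set_scope.
Local Open Scope ring_scope.
Section A.
Variable R : realType.
Notation N m := (normal_prob (m : R) (1 : R)).

Lemma pdf_shift (t x : R) :
  normal_pdf t 1 x = normal_pdf 0 1 x * expR (t * x - t ^+ 2 / 2).
Proof.
rewrite /normal_pdf oner_eq0 /= /normal_fun -mulrA -expRD; congr (_ * expR _).
rewrite expr1n. field. exact: isT.
Qed.

Lemma N_fin (m : R) A : measurable A -> N m A = (fine (N m A))%:E.
Proof. by move=> mA; rewrite fineK // fin_num_measure. Qed.

Lemma N_int (m : R) A : N m A = (\int[lebesgue_measure]_(x in A) (normal_pdf m 1 x)%:E)%E.
Proof. by []. Qed.

Lemma N_le_scale (t k : R) (A : set R) : measurable A ->
  (forall x, A x -> t * x <= k) ->
  (N t A <= (expR (k - t ^+ 2 / 2))%:E * N 0 A)%E.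
Proof.
move=> mA hA; rewrite !N_int -ge0_integralZl //=.
- apply: ge0_le_integral => //=.
  + by move=> x _; rewrite lee_fin normal_pdf_ge0.
  + by apply/measurable_EFinP; apply: measurable_funTS; exact: measurable_normal_pdf.
  + apply/measurable_EFinP; apply: measurable_funM => //.
    by apply: measurable_funTS; exact: measurable_normal_pdf.
  + move=> x Ax; rewrite -EFinM lee_fin (pdf_shift t) mulrC ler_wpM2r ?normal_pdf_ge0 //.
    by rewrite ler_expR lerD2r hA.
all: try by apply/measurable_EFinP; apply: measurable_funTS; exact: measurable_normal_pdf.
all: try by move=> x _; rewrite lee_fin normal_pdf_ge0.
all: by rewrite lee_fin expR_ge0.
Qed.

Lemma N_ge_scale (t k : R) (A : set R) : measurable A ->
  (forall x, A x -> k <= t * x) ->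
  ((expR (k - t ^+ 2 / 2))%:E * N 0 A <= N t A)%E.
Proof.
move=> mA hA; rewrite !N_int -ge0_integralZl //=.
- apply: ge0_le_integral => //=.
  + by move=> x _; rewrite lee_fin mulr_ge0 ?expR_ge0 ?normal_pdf_ge0.
  + apply/measurable_EFinP; apply: measurable_funM => //.
    by apply: measurable_funTS; exact: measurable_normal_pdf.
  + by apply/measurable_EFinP; apply: measurable_funTS; exact: measurable_normal_pdf.
  + move=> x Ax; rewrite -EFinM lee_fin (pdf_shift t) [X in _ <= X]mulrC ler_wpM2r ?normal_pdf_ge0 //.
    by rewrite ler_expR lerD2r hA.
all: try by apply/measurable_EFinP; apply: measurable_funTS; exact: measurable_normal_pdf.
all: try by move=> x _; rewrite lee_fin normal_pdf_ge0.
all: by rewrite lee_fin expR_ge0.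
Qed.

Definition nu (m : R) A := fine (N m A).

Lemma nu_ge0 m A : 0 <= nu m A.
Proof. by rewrite /nu fine_ge0 // measure_ge0. Qed.

Lemma nu_le1 m A : measurable A -> nu m A <= 1.
Proof.
move=> mA; rewrite /nu -lee_fin -N_fin //; exact: probability_le1.
Qed.

Lemma MLR (t : R) (A B : set R) : measurable A -> measurable B ->
  (forall x y, A x -> B y -> t * x <= t * y) ->
  nu t A * nu 0 B <= nu 0 A * nu t B.
Proof.
move=> mA mB hAB.
have [->|/set0P[x0 Ax0]] := eqVneq A set0.
  by rewrite /nu !measure0 /= !mul0r.
have [->|/set0P[y0 By0]] := eqVneq B set0.
  by rewrite /nu !measure0 /= !mulr0.
pose S := [set t * x | x in A].
have hS : has_sup S.
  split; first by exists (t * x0), x0.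
  by exists (t * y0) => _ [x Ax <-]; exact: hAB.
pose k := sup S.
have h1 : forall x, A x -> t * x <= k.
  by move=> x Ax; apply: sup_upper_bound => //; exists x.
have h2 : forall y, B y -> k <= t * y.
  move=> y By; apply: ge_sup; first by exists (t * x0), x0.
  by move=> _ [x Ax <-]; exact: hAB.
have e1 := @N_le_scale t k A mA h1.
have e2 := @N_ge_scale t k B mB h2.
move: e1 e2; rewrite (N_fin t A mA) (N_fin 0 A mA) (N_fin 0 B mB) (N_fin t B mB) -!EFinM !lee_fin.
rewrite -/(nu t A) -/(nu 0 A) -/(nu 0 B) -/(nu t B) => e1 e2.
set K := expR _ in e1 e2.
have K0 : 0 <= K by exact: expR_ge0.
have := nu_ge0 t A; have := nu_ge0 0 A; have := nu_ge0 0 B; have := nu_ge0 t B.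
nra.
Qed.

End A.
Section B.
Variable R : realType.
Notation N m := (normal_prob (m : R) (1 : R)).
Notation nu := (@nu R).

Lemma PhiE (x : R) : Phi x = nu 0 `]-oo, x].
Proof. by []. Qed.

Lemma N_itv x : N 0 `]-oo, x] = (Phi x)%:E.
Proof. by rewrite PhiE /nu -N_fin. Qed.

Lemma N_itvr x : N 0 `]x, +oo[ = (1 - Phi x)%:E.
Proof. by rewrite -setCitvl probability_setC // EFinB; congr (_ - _)%E; exact: N_itv.
Qed.

Lemma Phi_mono (x y : R) : x <= y -> Phi x <= Phi y.
Proof.
move=> xy; rewrite -lee_fin -!N_itv; apply: le_measure; rewrite ?inE //.
by apply: subset_itvl; rewrite bnd_simp.
Qed.

Lemma Phi_ge0 (x : R) : 0 <= Phi x. Proof. exact: nu_ge0. Qed.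
Lemma Phi_le1 (x : R) : Phi x <= 1. Proof. exact: nu_le1. Qed.

Lemma measurable_Phi : measurable_fun setT (@Phi R).
Proof. by apply: nondecreasing_measurable => // x y; exact: Phi_mono. Qed.

Lemma N_atom (s : R) : N 0 [set s] = 0%E.
Proof.
have h : (@lebesgue_measure R).-null_set [set s].
  move=> A mA As; apply/eqP; rewrite -measure_le0.
  by rewrite -(lebesgue_measure_set1 s); apply: le_measure; rewrite ?inE.
exact: (normal_prob_dominates 0 1 h).
Qed.

Lemma union_bound (F : nat -> set R) b : (forall n, measurable (F n)) ->
  nondecreasing_seq F -> (forall n, (N 0 (F n) <= b%:E)%E) ->
  (N 0 (\bigcup_n F n) <= b%:E)%E.
Proof.
move=> mF ndF hb.
have h := @nondecreasing_cvg_mu _ _ _ (N 0) F mF (bigcup_measurable (fun k _ => mF k)) ndF.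
rewrite -(cvg_lim _ h) //; apply: lime_le; first by apply/cvg_ex; eexists; exact: h.
exact: nearW.
Qed.

Lemma Phi_large (b : R) : b < 1 -> exists x, b < Phi x.
Proof.
move=> b1; apply/not_existsP => hn.
have hF : forall n, (N 0 `]-oo, n%:R] <= b%:E)%E.
  by move=> n; rewrite N_itv lee_fin leNgt; apply/negP => /(fun h => hn _ h).
have hnd : nondecreasing_seq (fun n => `]-oo, (n%:R : R)]%classic).
  by move=> n m nm; apply/subsetPset; apply: subset_itvl; rewrite bnd_simp ler_nat.
have := @union_bound (fun n => `]-oo, (n%:R : R)]%classic) b (fun n => measurable_itv _) hnd hF.
have -> : \bigcup_n `]-oo, (n%:R : R)]%classic = setT.
  apply/seteqP; split => // x _; exists (Num.truncn x).+1 => //=.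
  by rewrite in_itv /= ltW // truncnS_gt.
by rewrite probability_setT lee_fin leNgt b1.
Qed.

Lemma Phi_small (b : R) : 0 < b -> exists x, Phi x < b.
Proof.
move=> b0; apply/not_existsP => hn.
have hF : forall n, (N 0 `](- (n%:R : R))%R, +oo[%classic <= (1 - b)%:E)%E.
  move=> n; rewrite N_itvr lee_fin lerD2l lerN2 leNgt.
  by apply/negP => /(fun h => hn _ h).
have hnd : nondecreasing_seq (fun n => `]-(n%:R : R), +oo[%classic).
  by move=> n m nm; apply/subsetPset; apply: subset_itvr; rewrite bnd_simp lerN2 ler_nat.
have := @union_bound (fun n => `]-(n%:R : R), +oo[%classic) (1 - b) (fun n => measurable_itv _) hnd hF.
have -> : \bigcup_n `]-(n%:R : R), +oo[%classic = setT.
  apply/seteqP; split => // x _; exists (Num.truncn (- x)).+1 => //=.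
  by rewrite in_itv /= andbT ltrNl truncnS_gt.
rewrite probability_setT lee_fin => h; lra.
Qed.

Lemma PIT_D (b : R) : 0 <= b -> b < 1 ->
  measurable [set x | Phi x <= b] /\ (N 0 [set x | (Phi x <= b)%R] <= b%:E)%E.
Proof.
move=> b0 b1.
set D := [set x | Phi x <= b].
have mD : measurable D.
  have := measurable_Phi measurableT _ (measurable_itv `]-oo, b]).
  rewrite setTI; congr measurable; apply/seteqP; split => x /=; by rewrite in_itv.
split => //.
have [->|/set0P[x1 Dx1]] := eqVneq D set0; first by rewrite measure0 lee_fin.
have [x0 hx0] := @Phi_large b b1.
have ub : forall y, D y -> y <= x0.
  move=> y Dy; rewrite leNgt; apply/negP => /ltW /Phi_mono h.
  by move: hx0; rewrite ltNge (le_trans h Dy).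
have hs : has_sup D by split; [exists x1 | exists x0].
set s := sup D.
have h1 : (N 0 `]-oo, s[ <= b%:E)%E.
  pose F n := `]-oo, s - (n.+1%:R)^-1]%classic.
  have hnd : nondecreasing_seq F.
    move=> n m nm; apply/subsetPset; apply: subset_itvl; rewrite bnd_simp lerD2l lerN2.
    by rewrite lef_pV2 ?posrE // ler_nat.
  have hF : forall n, (N 0 (F n) <= b%:E)%E.
    move=> n; rewrite N_itv lee_fin.
    have he0 : 0 < (n.+1%:R : R)^-1 by rewrite invr_gt0.
    have [e De he] := sup_adherent he0 hs.
    by apply: (le_trans (Phi_mono _ _ (ltW he))); exact: De.
  have := @union_bound F b (fun n => measurable_itv _) hnd hF.
  apply: le_trans; apply: le_measure; rewrite ?inE //.
  - by apply: bigcup_measurable => k _; exact: measurable_itv.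
  - move=> x /=; rewrite in_itv /= => xs.
    have [k hk] := ltr_add_invr xs.
    by exists k => //; rewrite /F /= in_itv /= lerBrDr ltW.
have h2 : D `<=` `]-oo, s[ `|` [set s].
  move=> x Dx; have := sup_upper_bound hs Dx; rewrite le_eqVlt => /orP[/eqP->|xs].
    by right.
  by left; rewrite /= in_itv.
apply: (@le_trans _ _ (N 0 (`]-oo, s[%classic `|` [set s]))).
  apply: le_measure; rewrite ?inE //. exact: (measurableU _ _ (measurable_itv _) (measurable_set1 _)).
apply: le_trans; first by apply: measureU2 => //; exact: measurable_itv.
have ha := N_atom s. rewrite [X in (_ + X)%E]ha adde0. exact: h1.
Qed.

Lemma PIT_U (b : R) : 0 <= b -> b < 1 ->
  measurable [set x | 1 - Phi x <= b] /\ (N 0 [set x | (1 - Phi x <= b)%R] <= b%:E)%E.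
Proof.
move=> b0 b1.
set U := [set x | 1 - Phi x <= b].
have mU : measurable U.
  have := measurable_Phi measurableT _ (measurable_itv `[1 - b, +oo[).
  rewrite setTI; congr measurable; apply/seteqP; split => x /=;
    by rewrite in_itv /= andbT lerBlDr addrC -lerBlDr.
split => //.
have [->|/set0P[x1 Ux1]] := eqVneq U set0; first by rewrite measure0 lee_fin.
have hb : 0 < 1 - b by rewrite subr_gt0.
have [x0 hx0] := @Phi_small (1 - b) hb.
have lb : forall y, U y -> x0 <= y.
  move=> y Uy; rewrite leNgt; apply/negP => /ltW /Phi_mono h.
  move: Uy; rewrite /U /= lerBlDr addrC -lerBlDr => h'.
  by move: hx0; rewrite ltNge (le_trans h' h).
have hs : has_inf U by split; [exists x1 | exists x0].
set s := inf U.
have h1 : (N 0 `]s, +oo[ <= b%:E)%E.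
  pose F n := `]s + (n.+1%:R)^-1, +oo[%classic.
  have hnd : nondecreasing_seq F.
    move=> n m nm; apply/subsetPset; apply: subset_itvr; rewrite bnd_simp lerD2l.
    by rewrite lef_pV2 ?posrE // ler_nat.
  have hF : forall n, (N 0 (F n) <= b%:E)%E.
    move=> n; rewrite N_itvr lee_fin.
    have he0 : 0 < (n.+1%:R : R)^-1 by rewrite invr_gt0.
    have [e Ue he] := inf_adherent he0 hs.
    apply: le_trans Ue; rewrite lerD2l lerN2; exact: Phi_mono _ _ (ltW he).
  have := @union_bound F b (fun n => measurable_itv _) hnd hF.
  apply: le_trans; apply: le_measure; rewrite ?inE //.
  - by apply: bigcup_measurable => k _; exact: measurable_itv.
  - move=> x /=; rewrite in_itv /= andbT => xs.
    have [k hk] := ltr_add_invr xs.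
    by exists k => //; rewrite /F /= in_itv /= andbT.
have h2 : U `<=` `]s, +oo[ `|` [set s].
  move=> x Ux; have := ge_inf (proj2 hs) Ux; rewrite le_eqVlt => /orP[/eqP h|xs].
    by right; rewrite /s h.

  by left; rewrite /= in_itv /= andbT.
apply: (@le_trans _ _ (N 0 (`]s, +oo[%classic `|` [set s]))).
  apply: le_measure; rewrite ?inE //. exact: (measurableU _ _ (measurable_itv _) (measurable_set1 _)).
apply: le_trans; first by apply: measureU2 => //; exact: measurable_itv.
have ha := N_atom s. rewrite [X in (_ + X)%E]ha adde0. exact: h1.
Qed.

End B.
Section C.
Variable R : realType.

Definition two3 (b0 b1 b2 : bool) := (b0 && b1) || (b0 && ~~ b1 && b2) || (~~ b0 && b1 && b2).

Lemma os2 (x y z c : R) :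
  (nth 0 (sort <=%R [:: x; y; z]) 1 <= c) = two3 (x <= c) (y <= c) (z <= c).
Proof.
have hs : sorted <=%R (sort <=%R [:: x; y; z]) by apply: sort_sorted; exact: le_total.
have hp : perm_eq (sort <=%R [:: x; y; z]) [:: x; y; z] by rewrite perm_sort.
have hc : count (fun v => v <= c) (sort <=%R [:: x; y; z]) = count (fun v => v <= c) [:: x; y; z].
  exact: (permP hp).
have hsz : size (sort <=%R [:: x; y; z]) = 3%N by rewrite size_sort.
move: hs hc hsz; case: (sort _ _) => [|u [|v [|w [|]]]] //= /andP[uv /andP[vw _]] hc _.
have -> : two3 (x <= c) (y <= c) (z <= c) = (2 <= (x <= c)%R + ((y <= c)%R + ((z <= c)%R + 0)))%N.
  by rewrite /two3; case: (x <= c); case: (y <= c); case: (z <= c).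
rewrite -hc.
case: (lerP v c) => hv.
  by rewrite (le_trans uv hv); case: (w <= c).
have -> : (w <= c) = false by apply/negbTE; rewrite -ltNge (lt_le_trans hv vw).
by case: (u <= c).
Qed.

Lemma enum3 (f : 'I_3 -> R) : [seq f i | i <- enum 'I_3] = [:: f 0; f 1; f 2].
Proof.
have -> : enum 'I_3 = [:: 0; 1; 2].
  by apply: (inj_map val_inj); rewrite val_enum_ord.
by [].
Qed.

Lemma prn_le (t : 'I_3 -> R) (a : R) :
  (p_rn 2 t <= a) =
  two3 (1 - Phi (t 0) <= a / 2) (1 - Phi (t 1) <= a / 2) (1 - Phi (t 2) <= a / 2)
  || two3 (Phi (t 0) <= a / 2) (Phi (t 1) <= a / 2) (Phi (t 2) <= a / 2).
Proof.
rewrite /p_rn /pc_bonf /order_stat /= !enum3 /pplus /pminus ge_min.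
have h2 : forall y : R, (2%:R * y <= a) = (y <= a / 2).
  by move=> y; apply/idP/idP => h; lra.
by rewrite !subSS !subn0 !h2 !os2.
Qed.

End C.
Section D.
Variable R : realType.
Variable be : R.

Definition F3 (x y z : R) := x * y + x * (1 - y) * z + (1 - x) * y * z.

Definition Idx (th a b g : R) :=
  [/\ 0 <= a, 0 <= b, 0 <= g & a + b + g = 1] /\
  [/\ (th = 0 -> a <= be /\ b <= be),
   (0 <= th -> (1 - 2 * be) * b <= be * g) &
   (th <= 0 -> (1 - 2 * be) * a <= be * g)].

Lemma key tp ap bp gp tq aq bq gq tz az bz gz :
  0 < be -> be < 1/4 ->
  Idx tp ap bp gp -> Idx tq aq bq gq -> Idx tz az bz gz ->
  tz = 0 -> 0 <= tp -> tq <= 0 ->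
  F3 ap aq az + F3 bp bq bz <= 2 * be.
Proof.
move=> b0 b1 [[ap0 bp0 gp0 sp] [_ Hp _]] [[aq0 bq0 gq0 sq] [_ _ Hq]] [[az0 bz0 gz0 sz] [Hz _ _]] tz0 tp0 tq0.
have [haz hbz] := Hz tz0.
have {}Hp := Hp tp0. have {}Hq := Hq tq0.
have ap1 : ap <= 1 by lra. have aq1 : aq <= 1 by lra.
have bp1 : bp <= 1 by lra. have bq1 : bq <= 1 by lra.
have ma : 0 <= ap + aq - 2 * ap * aq by nra.
have mb : 0 <= bp + bq - 2 * bp * bq by nra.
have fa : F3 ap aq az <= be * (ap + aq) + (1 - 2 * be) * (ap * aq).
  rewrite /F3; nra.
have fb : F3 bp bq bz <= be * (bp + bq) + (1 - 2 * be) * (bp * bq).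
  rewrite /F3; nra.
have ga : (1 - 2 * be) * (ap * aq) <= be * gq.
  apply: le_trans Hq; rewrite ler_wpM2l //; first lra. nra.
have gb : (1 - 2 * be) * (bp * bq) <= be * gp.
  apply: le_trans Hp; rewrite ler_wpM2l //; first lra. nra.
nra.
Qed.

Lemma F3C1 x y z : F3 x y z = F3 y x z. Proof. rewrite /F3; ring. Qed.
Lemma F3C2 x y z : F3 x y z = F3 x z y. Proof. rewrite /F3; ring. Qed.

Lemma pick (tp tq : R) : ~ (0 < tp /\ 0 < tq) -> ~ (tp < 0 /\ tq < 0) ->
  (0 <= tp /\ tq <= 0) \/ (tp <= 0 /\ 0 <= tq).
Proof.
move=> h1 h2; case: (lerP 0 tp) => hp; case: (lerP 0 tq) => hq.
- case: (lerP tp 0) => hp'; first by right.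
  case: (lerP tq 0) => hq'; first by left.
  by exfalso; apply: h1.
- by left; split => //; exact: ltW.
- by right; split => //; exact: ltW.
- by exfalso; apply: h2.
Qed.

Lemma combine t0 a0 b0 g0 t1 a1 b1 g1 t2 a2 b2 g2 :
  0 < be -> be < 1/4 ->
  Idx t0 a0 b0 g0 -> Idx t1 a1 b1 g1 -> Idx t2 a2 b2 g2 ->
  ~ (0 < t0 /\ 0 < t1) -> ~ (0 < t0 /\ 0 < t2) -> ~ (0 < t1 /\ 0 < t2) ->
  ~ (t0 < 0 /\ t1 < 0) -> ~ (t0 < 0 /\ t2 < 0) -> ~ (t1 < 0 /\ t2 < 0) ->
  F3 a0 a1 a2 + F3 b0 b1 b2 <= 2 * be.
Proof.
move=> hb0 hb1 I0 I1 I2 p01 p02 p12 n01 n02 n12.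
have K012 := key _ _ _ _ _ _ _ _ _ _ _ _ hb0 hb1 I0 I1 I2.
have K102 := key _ _ _ _ _ _ _ _ _ _ _ _ hb0 hb1 I1 I0 I2.
have K021 := key _ _ _ _ _ _ _ _ _ _ _ _ hb0 hb1 I0 I2 I1.
have K201 := key _ _ _ _ _ _ _ _ _ _ _ _ hb0 hb1 I2 I0 I1.
have K120 := key _ _ _ _ _ _ _ _ _ _ _ _ hb0 hb1 I1 I2 I0.
have K210 := key _ _ _ _ _ _ _ _ _ _ _ _ hb0 hb1 I2 I1 I0.
rewrite !(F3C1 a1 a0) !(F3C1 b1 b0) in K102.
rewrite !(F3C2 a0 a2) !(F3C2 b0 b2) in K021.
rewrite !(F3C1 a2 a0) !(F3C1 b2 b0) !(F3C2 a0 a2) !(F3C2 b0 b2) in K201.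
rewrite !(F3C2 a1 a2 a0) !(F3C2 b1 b2 b0) !(F3C1 a1 a0) !(F3C1 b1 b0) in K120.
rewrite !(F3C1 a2 a1) !(F3C1 b2 b1) !(F3C2 a1 a2 a0) !(F3C2 b1 b2 b0) !(F3C1 a1 a0) !(F3C1 b1 b0) in K210.
have [z2|z2] := eqVneq t2 0.
  by case: (pick _ _ p01 n01) => [[h h']|[h h']]; [apply: K012 | apply: K102].
have [z1|z1] := eqVneq t1 0.
  by case: (pick _ _ p02 n02) => [[h h']|[h h']]; [apply: K021 | apply: K201].
have [z0|z0] := eqVneq t0 0.
  by case: (pick _ _ p12 n12) => [[h h']|[h h']]; [apply: K120 | apply: K210].
exfalso.
move: z0 z1 z2; rewrite !neq_lt => /orP[h0|h0] /orP[h1|h1] /orP[h2|h2]; tauto.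
Qed.

End D.
Section E.
Variable R : realType.

Lemma ub2 d (T : measurableType d) (mu : probability T R) (A B : set T) (a b : R) :
  measurable A -> measurable B -> (mu A <= a%:E)%E -> (mu B <= b%:E)%E ->
  (mu (A `|` B) <= (a + b)%:E)%E.
Proof.
move=> mA mB hA hB; apply: le_trans; first exact: measureU2.
by rewrite EFinD; apply: leeD.
Qed.

Lemma prod3 (F : 'I_3 -> \bar R) : (\prod_(i < 3) F i = F (0%R : 'I_3) * F (1%R : 'I_3) * F (2%R : 'I_3))%E.
Proof.
rewrite !big_ord_recl big_ord0 mule1 muleA; congr (_ * _ * _)%E; congr F; exact/val_inj.
Qed.

Lemma cap3 T (G : 'I_3 -> set T) :
  \bigcap_(i in [set: 'I_3]) G i = G 0 `&` G 1 `&` G 2.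
Proof.
apply/seteqP; split => w /=.
  by move=> h; split; [split|]; apply: h.
move=> [[h0 h1] h2] i _.
have : i = 0 \/ i = 1 \/ i = 2.
  case: i => -[|[|[|]]] // ?; [left|right; left|right; right]; exact/val_inj.
by case=> [->|[->|->]].
Qed.
End E.

Lemma helper1 (R : realType) (u dd g be : R) : u + dd + g = 1 -> u <= be -> dd <= be -> 1 - 2 * be <= g.
Proof. move=> *; lra. Qed.

Lemma F3E (R : realType) (x y z : R) :
  F3 R x y z = x * y * 1 + x * (1 - y) * z + (1 - x) * y * z.
Proof. rewrite /F3; ring. Qed.

Lemma card_pair (S : set 'I_3) (i j : 'I_3) : i != j -> i \in S -> j \in S -> (2 <= #|S|)%N.
Proof.
move=> ij iS jS.
have : ([set i; j] \subset S)%SET.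
  by apply/fintype.subsetP => x; rewrite !inE => /orP[/eqP->|/eqP->]; exact: set_mem.
by move/subset_leq_card; rewrite cards2 ij.
Qed.

Lemma not2p (R : realType) (th : 'I_3 -> R) (i j : 'I_3) : i != j ->
  (n_plus th < 2)%N -> ~ (0 < th i /\ 0 < th j).
Proof.
rewrite /n_plus => ij h [hi hj]; move: h; set S := (X in #|X|) => h.
have hiS : i \in S by rewrite /S inE.
have hjS : j \in S by rewrite /S inE.
by move: (card_pair S i j ij hiS hjS); rewrite leqNgt h.
Qed.

Lemma not2n (R : realType) (th : 'I_3 -> R) (i j : 'I_3) : i != j ->
  (n_minus th < 2)%N -> ~ (th i < 0 /\ th j < 0).
Proof.
rewrite /n_minus => ij h [hi hj]; move: h; set S := (X in #|X|) => h.
have hiS : i \in S by rewrite /S inE.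
have hjS : j \in S by rewrite /S inE.
by move: (card_pair S i j ij hiS hjS); rewrite leqNgt h.
Qed.

Theorem proposition1 (R : realType) (d : measure_display) (T : measurableType d)
    (P : probability T R) (theta : 'I_3 -> R) (X : 'I_3 -> {RV P >-> R}) :
  mutually_independent X ->
  (forall i (A : set R), measurable A ->
     distribution P (X i) A = normal_prob (theta i) 1 A) ->
  H_rn 2 theta ->
  forall alpha : R, 0 < alpha < 1 / 2 ->
    (P [set w | (p_rn 2 (fun i => X i w) <= alpha)%R] <= alpha%:E)%E.
Proof.
move=> hind hdist [hp hn] alpha /andP[a0 a1].
set be := alpha / 2.
have be0 : 0 < be by rewrite /be; lra.
have be1 : be < 1 / 4 by rewrite /be; lra.
have be0' : 0 <= be by lra.
have be1' : be < 1 by lra.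
have [mU hU0] := PIT_U R be be0' be1'.
have [mD hD0] := PIT_D R be be0' be1'.
set U := [set x : R | (1 - Phi x <= be)%R] in mU hU0 *.
set D := [set x : R | (Phi x <= be)%R] in mD hD0 *.
set G := ~` (U `|` D).
have mUD : measurable (U `|` D) by exact: measurableU.
have mG : measurable G by exact: measurableC.
have UD : U `&` D = set0.
  apply/seteqP; split => // x [h1 h2]; move: h1 h2; rewrite /U /D /= => h1 h2; lra.
have nuC : forall m S, measurable S -> nu R m (~` S) = 1 - nu R m S.
  move=> m S mS; rewrite /nu.
  have h : normal_prob m 1 (~` S) = (1 - normal_prob m 1 S)%E := probability_setC _ mS.
  by rewrite h (N_fin _ _ _ mS) -EFinB.
have nuT : forall m, nu R m setT = 1.
  move=> m; rewrite /nu.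
  have h : normal_prob m 1 setT = 1%E := probability_setT _.
  by rewrite h.
have sum1 : forall m, nu R m U + nu R m D + nu R m G = 1.
  move=> m; rewrite /G nuC //.
  have h : normal_prob m 1 (U `|` D) = (normal_prob m 1 U + normal_prob m 1 D)%E.
    by apply: measureU.
  by rewrite /nu h (N_fin _ _ _ mU) (N_fin _ _ _ mD) -EFinD /=; ring.
have nu0U : nu R 0 U <= be by rewrite /nu -lee_fin -N_fin.
have nu0D : nu R 0 D <= be by rewrite /nu -lee_fin -N_fin.
have DG : forall x y, D x -> G y -> x <= y.
  move=> x y Dx Gy; rewrite leNgt; apply/negP => yx.
  by apply: Gy; right; apply: le_trans (Phi_mono R _ _ (ltW yx)) Dx.
have UG : forall x y, U x -> G y -> y <= x.
  move=> x y Ux Gy; rewrite leNgt; apply/negP => xy.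
  apply: Gy; left; rewrite /U /=; apply: le_trans Ux.
  by rewrite lerD2l lerN2; exact: Phi_mono R _ _ (ltW xy).
have Ni : forall i, Idx R be (theta i) (nu R (theta i) U) (nu R (theta i) D) (nu R (theta i) G).
  move=> i; set t := theta i.
  have s0 := sum1 0; have st := sum1 t.
  have := nu_ge0 R t U; have := nu_ge0 R t D; have := nu_ge0 R t G.
  have := nu_ge0 R 0 U; have := nu_ge0 R 0 D; have := nu_ge0 R 0 G.
  move=> g0U g0D g0G gtU gtD gtG.
  split; first by split.
  split.
  - by move=> ->.
  - move=> t0; have h := MLR R t D G mD mG (fun x y Dx Gy => ler_wpM2l t0 (DG x y Dx Gy)).
    have e1 : 1 - 2 * be <= nu R 0 G by exact: helper1 s0 nu0U nu0D.
    apply: (@le_trans _ _ (nu R 0 G * nu R t D)); first by rewrite ler_wpM2r.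
    rewrite mulrC; apply: le_trans h _; by rewrite ler_wpM2r.
  - move=> t0; have h := MLR R t U G mU mG (fun x y Ux Gy => ler_wnM2l t0 (UG x y Ux Gy)).
    have e1 : 1 - 2 * be <= nu R 0 G by exact: helper1 s0 nu0U nu0D.
    apply: (@le_trans _ _ (nu R 0 G * nu R t U)); first by rewrite ler_wpM2r.
    rewrite mulrC; apply: le_trans h _; by rewrite ler_wpM2r.
pose cell (S0 S1 S2 : set R) := X 0 @^-1` S0 `&` X 1 @^-1` S1 `&` X 2 @^-1` S2.
have mcell : forall S0 S1 S2, measurable S0 -> measurable S1 -> measurable S2 ->
    measurable (cell S0 S1 S2).
  move=> S0 S1 S2 m0 m1 m2; apply: measurableI; [apply: measurableI|];
    exact: measurable_funPTI.
have PX : forall i S, measurable S -> P (X i @^-1` S) = (nu R (theta i) S)%:E.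
  move=> i S mS; have := hdist i S mS; rewrite /distribution /pushforward => ->.
  exact: N_fin.
have Pcell : forall S0 S1 S2, measurable S0 -> measurable S1 -> measurable S2 ->
   P (cell S0 S1 S2) = (nu R (theta 0) S0 * nu R (theta 1) S1 * nu R (theta 2) S2)%:E.
  move=> S0 S1 S2 m0 m1 m2.
  pose A (i : 'I_3) := if val i == 0%N then S0 else if val i == 1%N then S1 else S2.
  have mA : forall i, measurable (A i).
    by move=> i; rewrite /A; case: ifP => _ //; case: ifP.
  have := hind A mA; rewrite cap3 prod3 /A /= => h.
  by rewrite /cell h !PX // -!EFinM.
have Eeq : [set w | (p_rn 2 (fun i => X i w) <= alpha)%R] =
  (cell U U setT `|` cell U (~` U) U `|` cell (~` U) U U) `|`
  (cell D D setT `|` cell D (~` D) D `|` cell (~` D) D D).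
  apply/seteqP; split => w /=; rewrite prn_le -/be /cell /U /D /= /two3;
  case: (1 - Phi (X 0 w) <= be); case: (1 - Phi (X 1 w) <= be);
  case: (1 - Phi (X 2 w) <= be); case: (Phi (X 0 w) <= be); case: (Phi (X 1 w) <= be);
  case: (Phi (X 2 w) <= be) => //=; intuition (auto || discriminate).
rewrite Eeq.
have mUc : measurable (~` U) by exact: measurableC.
have mDc : measurable (~` D) by exact: measurableC.
have grp : forall S, measurable S ->
  (P (cell S S setT `|` cell S (~` S) S `|` cell (~` S) S S) <=
   (F3 R (nu R (theta 0) S) (nu R (theta 1) S) (nu R (theta 2) S))%:E)%E.
  move=> S mS; have mSc : measurable (~` S) by exact: measurableC.
  have -> : F3 R (nu R (theta 0) S) (nu R (theta 1) S) (nu R (theta 2) S) =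
    nu R (theta 0) S * nu R (theta 1) S * nu R (theta 2) setT +
    nu R (theta 0) S * nu R (theta 1) (~` S) * nu R (theta 2) S +
    nu R (theta 0) (~` S) * nu R (theta 1) S * nu R (theta 2) S.
    by rewrite nuT !nuC //; exact: F3E.
  apply: ub2; first (by apply: measurableU; exact: mcell); first exact: mcell.
  - apply: ub2; try exact: mcell; by rewrite Pcell.
  - by rewrite Pcell.
have mA' : measurable (cell U U setT `|` cell U (~` U) U `|` cell (~` U) U U).
  by repeat apply: measurableU; apply: mcell.
have mB' : measurable (cell D D setT `|` cell D (~` D) D `|` cell (~` D) D D).
  by repeat apply: measurableU; apply: mcell.
apply: le_trans; first exact: (@ub2 R d T P _ _ _ _ mA' mB' (grp U mU) (grp D mD)).
rewrite lee_fin.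
have -> : alpha = 2 * be by rewrite /be; field.
apply: combine (Ni 0) (Ni 1) (Ni 2) _ _ _ _ _ _ => //.
- exact: not2p.
- exact: not2p.
- exact: not2p.
- exact: not2n.
- exact: not2n.
- exact: not2n.
Qed.
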